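(* Suppose $z^\star=(v^\star,\lambda^\star,\mu^\star)$ is a fixed point of the SQP-type iteration $z_{k+1}=\pi(z_k)$ and that the second-order sufficient conditions (SOSC), the linear independence constraint qualification (LICQ) and strict complementarity hold at $z^\star$ with respect to the QP subproblem (defined below) with $z_k=z^\star$. Then, in a neighborhood of $z^\star$, the iteration map $z_{k+1}=\pi(z_k)$ is given by the solution to the parametric root-finding problem $R(z;z_k)=0$ with the residual \[ R(z;\bar z)=\begin{bmatrix} W(\bar z)(v-\bar v)+q(\bar z)+\tilde G(\bar v)\tilde\lambda \\ \tilde g(\bar v)+\tilde G(\bar v)^{\top}(v-\bar v)\end{bmatrix}, \] where $\tilde g(v)=(g(v),h_{\mathcal A}(v))$ and $\tilde G(\bar v)=(G(\bar v),H_{\mathcal A}(\bar v))$ collect the equality constraints and the strictly active inequality constraints (index set $\mathcal A$), with associated multipliers $\tilde\lambda=(\lambda,\mu_{\mathcal A})$. Furthermore, the map $\pi$ is differentiable in a neighborhood of $z^\star$.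
   Context: Consider the NLP $\min_{v\in\mathbb R^{n_v}} f(v)$ s.t. $g(v)=0$, $h(v)\le 0$, with $f,g,h$ twice continuously differentiable, and Lagrangian $\mathcal L(v,\lambda,\mu)=f(v)+\lambda^\top g(v)+\mu^\top h(v)$. For a primal-dual iterate $z_k=(v_k,\lambda_k,\mu_k)$, the QP subproblem is $\min_v \tfrac12 (v-v_k)^\top W(z_k)(v-v_k)+q(z_k)^\top(v-v_k)$ s.t. $g(v_k)+G(v_k)^\top(v-v_k)=0$, $h(v_k)+H(v_k)^\top(v-v_k)\le 0$, where $W(z)\succeq 0$ approximates $\nabla_v^2\mathcal L$, and $q(z)\approx\nabla f(v)$ (possibly depending on the dual iterates), $G(v)\approx\nabla g(v)$, $H(v)\approx\nabla h(v)$ are possibly inexact first-order derivatives. The SQP-type iteration is $z_{k+1}=\pi(z_k)$, where $\pi(z_k)$ is the primal-dual solution of this QP, i.e. $z_{k+1}$ satisfies its KKT conditions. *)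

(* Defs.v *)
From HB Require Import structures.
From mathcomp Require Import all_boot all_order all_algebra.
From mathcomp Require Import all_classical all_reals all_analysis.
Set Implicit Arguments. Unset Strict Implicit. Unset Printing Implicit Defensive.
Import Order.TTheory GRing.Theory Num.Theory.
Import numFieldNormedType.Exports.
Local Open Scope classical_set_scope.
Local Open Scope ring_scope.

Section Defs.
Variable R : realType.

(* continuously differentiable (finite-dimensional setting: every directional
   derivative x |-> 'd f x u is continuous) *)
Definition C1 (U V : normedModType R) (f : U -> V) : Prop :=
  (forall x, differentiable f x) /\ (forall u : U, continuous (fun x => 'd f x u)).

Definition C2 (U V : normedModType R) (f : U -> V) : Prop :=
  C1 f /\ (forall u : U, C1 (fun x => 'd f x u)).

Variables nv ng nh : nat.

Definition PD := ('cV[R]_nv * 'cV[R]_ng * 'cV[R]_nh)%type.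
Definition pv (z : PD) : 'cV[R]_nv := z.1.1.
Definition plam (z : PD) : 'cV[R]_ng := z.1.2.
Definition pmu (z : PD) : 'cV[R]_nh := z.2.

Variables (W : PD -> 'M[R]_nv) (q : PD -> 'cV[R]_nv)
  (g : 'cV[R]_nv -> 'cV[R]_ng) (h : 'cV[R]_nv -> 'cV[R]_nh)
  (G : 'cV[R]_nv -> 'M[R]_(nv, ng)) (H : 'cV[R]_nv -> 'M[R]_(nv, nh)).

Definition hlin (zb : PD) (v : 'cV[R]_nv) : 'cV[R]_nh :=
  h (pv zb) + (H (pv zb))^T *m (v - pv zb).

Definition QP_KKT (zb z : PD) : Prop :=
  [/\ W zb *m (pv z - pv zb) + q zb + G (pv zb) *m plam z + H (pv zb) *m pmu z = 0,
      g (pv zb) + (G (pv zb))^T *m (pv z - pv zb) = 0,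
      (forall i, hlin zb (pv z) i 0 <= 0),
      (forall i, 0 <= pmu z i 0) &
      (forall i, pmu z i 0 * hlin zb (pv z) i 0 = 0)].

Definition active_set (zs : PD) : {set 'I_nh} :=
  [set i | h (pv zs) i 0 == 0].

Definition QP_LICQ (zs : PD) : Prop :=
  forall (a : 'cV[R]_ng) (b : 'cV[R]_nh),
    (forall i, i \notin active_set zs -> b i 0 = 0) ->
    G (pv zs) *m a + H (pv zs) *m b = 0 -> a = 0 /\ b = 0.

Definition QP_SC (zs : PD) : Prop :=
  forall i, i \in active_set zs -> 0 < pmu zs i 0.

Definition QP_SOSC (zs : PD) : Prop :=
  forall d : 'cV[R]_nv, d != 0 ->
    (G (pv zs))^T *m d = 0 ->
    (forall i, i \in active_set zs -> 0 < pmu zs i 0 -> ((H (pv zs))^T *m d) i 0 = 0) ->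
    (forall i, i \in active_set zs -> pmu zs i 0 = 0 -> ((H (pv zs))^T *m d) i 0 <= 0) ->
    0 < (d^T *m W zs *m d) 0 0.

Definition maskA (A : {set 'I_nh}) (m : 'cV[R]_nh) : 'cV[R]_nh :=
  \col_i (if i \in A then m i 0 else 0).

(* The component tilde g is
   (g, h_A); its h-block is stored in an nh-vector whose entries outside A
   are 0; the multiplier tilde lambda = (lambda, mu_A). *)
Definition resid (A : {set 'I_nh}) (z zb : PD) : PD :=
  (W zb *m (pv z - pv zb) + q zb + G (pv zb) *m plam z
     + H (pv zb) *m maskA A (pmu z),
   g (pv zb) + (G (pv zb))^T *m (pv z - pv zb),
   maskA A (hlin zb (pv z))).

End Defs.

(* Main.v *)
Require Import Defs.
From HB Require Import structures.
From mathcomp Require Import all_boot all_order all_algebra.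
From mathcomp Require Import all_classical all_reals all_analysis.
From mathcomp Require Import ring lra.
Import Order.TTheory GRing.Theory Num.Theory.
Import numFieldNormedType.Exports.
Local Open Scope classical_set_scope.
Local Open Scope ring_scope.
Set Implicit Arguments. Unset Strict Implicit. Unset Printing Implicit Defensive.

Section Tools.
Variable R : realType.
Variable U : normedModType R.

Lemma diff_fst (A B : normedModType R) (x : A * B) :
  differentiable (fun p : A * B => p.1) x.
Proof.
have lin : linear (fun p : A * B => p.1) by [].
pose M := GRing.isLinear.Build _ _ _ _ _ lin.
pose L : {linear _ -> _} := HB.pack (fun p : A * B => p.1) M.
rewrite -[(fun p : A * B => p.1)]/(L : _ -> _).
apply: linear_differentiable => -[a b]; exact: cvg_fst.
Qed.

Lemma diff_snd (A B : normedModType R) (x : A * B) :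
  differentiable (fun p : A * B => p.2) x.
Proof.
have lin : linear (fun p : A * B => p.2) by [].
pose M := GRing.isLinear.Build _ _ _ _ _ lin.
pose L : {linear _ -> _} := HB.pack (fun p : A * B => p.2) M.
rewrite -[(fun p : A * B => p.2)]/(L : _ -> _).
apply: linear_differentiable => -[a b]; exact: cvg_snd.
Qed.

Definition mxd m n (F : U -> 'M[R]_(m, n)) x :=
  forall i j, differentiable (fun z => F z i j) x.

Lemma mxd_diff m n (F : U -> 'M[R]_(m, n)) x : differentiable F x -> mxd F x.
Proof.
move=> dF i j.
have := @differentiable_comp _ _ _ _ F (fun N : 'M[R]_(m,n) => N i j) x dF (differentiable_coord _ _ _).
by [].
Qed.

Lemma diff_mxd m n (F : U -> 'M[R]_(m, n)) x : mxd F x -> differentiable F x.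
Proof.
move=> dF.
have -> : F = (fun z => \sum_(i < m) \sum_(j < n) F z i j *: delta_mx i j).
  by apply/funext => z; rewrite -matrix_sum_delta.
have E : (fun z => \sum_(i < m) \sum_(j < n) F z i j *: delta_mx i j) =
   \sum_(i < m) (fun z => \sum_(j < n) F z i j *: delta_mx i j).
  by apply/funext => z; rewrite fct_sumE.
rewrite E; apply: differentiable_sum => i.
have E2 : (fun z => \sum_(j < n) F z i j *: delta_mx i j) =
   \sum_(j < n) (fun z => F z i j *: (delta_mx i j : 'M[R]_(m,n))).
  by apply/funext => z; rewrite fct_sumE.
rewrite E2; apply: differentiable_sum => j.
exact: differentiableZl.
Qed.

Lemma diff_big_sum (I : Type) (r : seq I) (P : pred I) (F : I -> U -> R) x :
  (forall i, differentiable (F i) x) ->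
  differentiable (fun z => \sum_(i <- r | P i) F i z) x.
Proof.
move=> dF; elim: r => [|a r IH].
  under eq_fun do rewrite big_nil. exact: differentiable_cst.
under eq_fun do rewrite big_cons.
case: (P a) => //.
exact: (differentiableD (dF a) IH).
Qed.

Lemma diff_big_prod (I : Type) (r : seq I) (P : pred I) (F : I -> U -> R) x :
  (forall i, differentiable (F i) x) ->
  differentiable (fun z => \prod_(i <- r | P i) F i z) x.
Proof.
move=> dF; elim: r => [|a r IH].
  under eq_fun do rewrite big_nil. exact: differentiable_cst.
under eq_fun do rewrite big_cons.
case: (P a) => //.
exact: (differentiableM (dF a) IH).
Qed.


Lemma mxd_cst m n (C : 'M[R]_(m, n)) x : mxd (fun _ : U => C) x.
Proof. move=> i j; exact: differentiable_cst. Qed.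

Lemma mxd_add m n (A B : U -> 'M[R]_(m, n)) x :
  mxd A x -> mxd B x -> mxd (fun z => A z + B z) x.
Proof.
move=> dA dB i j; under eq_fun do rewrite mxE.
exact: (differentiableD (dA i j) (dB i j)).
Qed.

Lemma mxd_opp m n (A : U -> 'M[R]_(m, n)) x :
  mxd A x -> mxd (fun z => - A z) x.
Proof.
move=> dA i j; under eq_fun do rewrite mxE.
exact: (differentiableN (dA i j)).
Qed.

Lemma mxd_sub m n (A B : U -> 'M[R]_(m, n)) x :
  mxd A x -> mxd B x -> mxd (fun z => A z - B z) x.
Proof. by move=> dA dB; apply: mxd_add => //; apply: mxd_opp. Qed.

Lemma mxd_mul m n p (A : U -> 'M[R]_(m, n)) (B : U -> 'M[R]_(n, p)) x :
  mxd A x -> mxd B x -> mxd (fun z => A z *m B z) x.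
Proof.
move=> dA dB i j; under eq_fun do rewrite mxE.
apply: (@diff_big_sum _ _ _ (fun k z => A z i k * B z k j)) => k.
exact: (differentiableM (dA i k) (dB k j)).
Qed.

Lemma mxd_tr m n (A : U -> 'M[R]_(m, n)) x :
  mxd A x -> mxd (fun z => (A z)^T) x.
Proof. by move=> dA i j; under eq_fun do rewrite mxE; apply: dA. Qed.

Lemma mxd_scale m n (k : U -> R) (A : U -> 'M[R]_(m, n)) x :
  differentiable k x -> mxd A x -> mxd (fun z => k z *: A z) x.
Proof.
move=> dk dA i j; under eq_fun do rewrite mxE.
exact: (differentiableM dk (dA i j)).
Qed.

Lemma mxd_row m n1 n2 (A : U -> 'M[R]_(m, n1)) (B : U -> 'M[R]_(m, n2)) x :
  mxd A x -> mxd B x -> mxd (fun z => row_mx (A z) (B z)) x.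
Proof.
move=> dA dB i j; rewrite -(splitK j); case: (fintype.split j) => k /=.
  by under eq_fun do rewrite row_mxEl; apply: dA.
by under eq_fun do rewrite row_mxEr; apply: dB.
Qed.

Lemma mxd_lsub m n1 n2 (A : U -> 'M[R]_(m, n1 + n2)) x :
  mxd A x -> mxd (fun z => lsubmx (A z)) x.
Proof. by move=> dA i j; under eq_fun do rewrite mxE; apply: dA. Qed.

Lemma mxd_rsub m n1 n2 (A : U -> 'M[R]_(m, n1 + n2)) x :
  mxd A x -> mxd (fun z => rsubmx (A z)) x.
Proof. by move=> dA i j; under eq_fun do rewrite mxE; apply: dA. Qed.

Lemma diff_det n (A : U -> 'M[R]_n) x :
  mxd A x -> differentiable (fun z => \det (A z)) x.
Proof.
move=> dA; rewrite /determinant.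
refine (@diff_big_sum _ _ _ (fun s z => _) x _) => s.
apply: (differentiableM (differentiable_cst _ _)).
refine (@diff_big_prod _ _ _ (fun i z => _) x _) => i.
exact: dA.
Qed.

Lemma mxd_adj n (A : U -> 'M[R]_n) x :
  mxd A x -> mxd (fun z => \adj (A z)) x.
Proof.
move=> dA i j; under eq_fun do rewrite mxE /cofactor.
apply: (differentiableM (differentiable_cst _ _)).
apply: diff_det => a b; under eq_fun do rewrite !mxE.
exact: dA.
Qed.

Lemma mxd_comp (V : normedModType R) m n (F : V -> 'M[R]_(m, n)) (P : U -> V) x :
  differentiable P x -> differentiable F (P x) -> mxd (fun z => F (P z)) x.
Proof.
move=> dP dF; apply: mxd_diff.
exact: (@differentiable_comp _ _ _ _ P F x dP dF).
Qed.

End Tools.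

Section Main.
Variable R : realType.
Variables nv ng nh : nat.
Variables (W : PD R nv ng nh -> 'M[R]_nv) (q : PD R nv ng nh -> 'cV[R]_nv)
  (g : 'cV[R]_nv -> 'cV[R]_ng) (h : 'cV[R]_nv -> 'cV[R]_nh)
  (G : 'cV[R]_nv -> 'M[R]_(nv, ng)) (H : 'cV[R]_nv -> 'M[R]_(nv, nh)).
Variable zs : PD R nv ng nh.

Local Notation PDt := (PD R nv ng nh).
Local Notation A := (active_set h zs).
Local Notation N := ((nv + ng) + nh)%N.

Definition enc (z : PDt) : 'rV[R]_N :=
  row_mx (row_mx (pv z)^T (plam z)^T) (pmu z)^T.
Definition dec (y : 'rV[R]_N) : PDt :=
  ((lsubmx (lsubmx y))^T, (rsubmx (lsubmx y))^T, (rsubmx y)^T).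

Lemma enc_dec y : enc (dec y) = y.
Proof. by rewrite /enc /dec /pv /plam /pmu /= !trmxK !hsubmxK. Qed.

Lemma dec_enc c : dec (enc c) = c.
Proof.
case: c => [[a b] d].
by rewrite /enc /dec /pv /plam /pmu /= row_mxKl row_mxKr row_mxKl row_mxKr !trmxK.
Qed.

Lemma enc_inj : injective enc.
Proof. by move=> c c' E; rewrite -(dec_enc c) E dec_enc. Qed.

Lemma maskA_lin (a : R) (m m' : 'cV[R]_nh) :
  maskA A (a *: m + m') = a *: maskA A m + maskA A m'.
Proof. by apply/colP => i; rewrite !mxE; case: (i \in A) => //; rewrite mulr0 addr0. Qed.

Lemma maskA_id (m : 'cV[R]_nh) : (forall i, i \notin A -> m i 0 = 0) -> maskA A m = m.
Proof.
move=> Hm; apply/colP => i; rewrite !mxE; case: ifP => // /negbT /Hm ->.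
by [].
Qed.

Definition Lop (zb : PDt) (c : PDt) : PDt :=
  (W zb *m pv c + G (pv zb) *m plam c + H (pv zb) *m maskA A (pmu c),
   (G (pv zb))^T *m pv c,
   maskA A ((H (pv zb))^T *m pv c) + (pmu c - maskA A (pmu c))).

Definition bPD (zb : PDt) : PDt :=
  (- q zb, - g (pv zb), - maskA A (h (pv zb))).

Definition fL zb (y : 'rV[R]_N) : 'rV[R]_N := enc (Lop zb (dec y)).

Lemma enc_lin (a : R) c c' : enc (a *: c + c') = a *: enc c + enc c'.
Proof.
case: c => [[c1 c2] c3]; case: c' => [[d1 d2] d3].
rewrite /enc /pv /plam /pmu /= !linearP /=.
by rewrite !scale_row_mx !add_row_mx.
Qed.

Lemma dec_lin (a : R) y y' : dec (a *: y + y') = a *: dec y + dec y'.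
Proof. by rewrite /dec !linearP /=. Qed.

Lemma Lop_lin zb (a : R) c c' : Lop zb (a *: c + c') = a *: Lop zb c + Lop zb c'.
Proof.
case: c => [[c1 c2] c3]; case: c' => [[d1 d2] d3].
rewrite /Lop /pv /plam /pmu /=.
rewrite !maskA_lin !mulmxDr -!scalemxAr.
move: (maskA A c3) (maskA A d3) => m3 n3.
move: (W zb *m c1) (W zb *m d1) (G zb.1.1 *m c2) (G zb.1.1 *m d2)
  (H zb.1.1 *m m3) (H zb.1.1 *m n3) ((G zb.1.1)^T *m c1) ((G zb.1.1)^T *m d1)
  ((H zb.1.1)^T *m c1) ((H zb.1.1)^T *m d1) => x1 y1 x2 y2 x3 y3 x4 y4 x5 y5.
rewrite maskA_lin.
move: (maskA A x5) (maskA A y5) => u v.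
congr (_, _, _); apply/matrixP => i j; rewrite !mxE; lra.
Qed.

Lemma fL_lin zb : linear (fL zb).
Proof. by move=> a y y'; rewrite /fL dec_lin Lop_lin enc_lin. Qed.

Definition Kmx zb : 'M[R]_N := lin1_mx (fL zb).

Lemma mulK zb y : y *m Kmx zb = fL zb y.
Proof.
pose M := GRing.isLinear.Build _ _ _ _ _ (fL_lin zb).
pose L : {linear _ -> _} := HB.pack (fL zb) M.
exact: (mul_rV_lin1 L).
Qed.


Definition bvec zb : 'rV[R]_N := enc (bPD zb).
Definition sol zb : 'rV[R]_N :=
  bvec zb *m ((\det (Kmx zb))^-1 *: \adj (Kmx zb)).
Definition piF (zb : PDt) : PDt :=
  let d := dec (sol zb) in (pv zb + pv d, plam d, pmu d).
Definition zdiff (z zb : PDt) : PDt := (pv z - pv zb, plam z, pmu z).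

Lemma sol_ok zb : \det (Kmx zb) != 0 -> sol zb *m Kmx zb = bvec zb.
Proof.
move=> d0; rewrite /sol -mulmxA -scalemxAl mul_adj_mx scale_scalar_mx mulVf //.
by rewrite mulmx1.
Qed.

Lemma sol_uniq zb y : \det (Kmx zb) != 0 -> y *m Kmx zb = bvec zb -> y = sol zb.
Proof.
move=> d0 E; rewrite /sol -E -mulmxA -scalemxAr mul_mx_adj scale_scalar_mx mulVf //.
by rewrite mulmx1.
Qed.

Lemma zdiff_pi zb : zdiff (piF zb) zb = dec (sol zb).
Proof.
rewrite /zdiff /piF; case: (dec (sol zb)) => [[a b] c].
by rewrite /pv /plam /pmu /= [zb.1.1 + _]addrC addrK.
Qed.

Lemma zdiff_inj zb z : zdiff z zb = dec (sol zb) -> z = piF zb.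
Proof.
rewrite /piF => <-; case: z => [[a b] c].
by rewrite /zdiff /pv /plam /pmu /= addrC subrK.
Qed.

Lemma Lop_mul zb c : enc c *m Kmx zb = enc (Lop zb c).
Proof. by rewrite mulK /fL dec_enc. Qed.

Lemma solve1 zb : \det (Kmx zb) != 0 -> Lop zb (zdiff (piF zb) zb) = bPD zb.
Proof.
move=> d0; apply: enc_inj; rewrite -Lop_mul zdiff_pi enc_dec.
exact: sol_ok.
Qed.

Lemma solve2 zb z : \det (Kmx zb) != 0 -> Lop zb (zdiff z zb) = bPD zb -> z = piF zb.
Proof.
move=> d0 E; apply: zdiff_inj; rewrite -(dec_enc (zdiff z zb)); congr dec.
by apply: sol_uniq => //; rewrite Lop_mul E.
Qed.

Lemma RES zb z :
  Lop zb (zdiff z zb) = bPD zb <->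
  resid W q g h G H A z zb = 0 /\ (forall i, i \notin A -> pmu z i 0 = 0).
Proof.
rewrite /Lop /bPD /resid /zdiff /hlin /pv /plam /pmu /=.
move: (W zb *m (z.1.1 - zb.1.1)) (G zb.1.1 *m z.1.2) (H zb.1.1 *m maskA A z.2)
  ((G zb.1.1)^T *m (z.1.1 - zb.1.1)) ((H zb.1.1)^T *m (z.1.1 - zb.1.1))
  => x1 x2 x3 x4 x5.
split.
  case=> /matrixP E1 /matrixP E2 /colP E3.
  have Hm : forall i, i \notin A -> z.2 i 0 = 0.
    move=> i iA; have := E3 i; rewrite !mxE (negbTE iA); lra.
  split=> //.
  congr (_, _, _); apply/matrixP => i j; rewrite !mxE.
  - have := E1 i j; rewrite !mxE; lra.
  - have := E2 i j; rewrite !mxE; lra.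
  - have := E3 i; rewrite !mxE; case: (i \in A) => //; rewrite ?ord1; lra.
case=> E Hm; case: E => /matrixP E1 /matrixP E2 /colP E3.
congr (_, _, _); apply/matrixP => i j; rewrite !mxE.
- have := E1 i j; rewrite !mxE; lra.
- have := E2 i j; rewrite !mxE; lra.
- rewrite ord1; have := E3 i; rewrite !mxE.
  case: ifP => iA; first lra.
  by rewrite Hm ?iA //; lra.
Qed.


Lemma QF (M : 'M[R]_nv) (GG : 'M[R]_(nv, ng)) (HH : 'M[R]_(nv, nh)) (d : 'cV[R]_nv) (l : 'cV[R]_ng) (m : 'cV[R]_nh) :
  M *m d + GG *m l + HH *m m = 0 ->
  (d^T *m M *m d) 0 0 =
   - (\sum_j (GG^T *m d) j 0 * l j 0) - \sum_i (HH^T *m d) i 0 * m i 0.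
Proof.
move=> E.
have E' : M *m d = - (GG *m l) - HH *m m.
  move: E; move: (M *m d) (GG *m l) (HH *m m) => a b c /matrixP E.
  apply/matrixP => i j; have := E i j; rewrite !mxE; lra.
rewrite -mulmxA E' mulmxBr mulmxN !mulmxA.
have -> : d^T *m GG = (GG^T *m d)^T by rewrite trmx_mul trmxK.
have -> : d^T *m HH = (HH^T *m d)^T by rewrite trmx_mul trmxK.
move: (GG^T *m d) (HH^T *m d) => u w.
rewrite !mxE; congr (- _ - _); apply: eq_bigr => k _; rewrite !mxE //.
Qed.

Hypothesis KKT0 : QP_KKT W q g h G H zs zs.
Hypothesis SOSC : QP_SOSC W h G H zs.
Hypothesis LICQ : QP_LICQ h G H zs.
Hypothesis SC : QP_SC h zs.
Hypothesis PSD : forall z (d : 'cV[R]_nv), 0 <= (d^T *m W z *m d) 0 0.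

Lemma enc0 : enc 0 = 0.
Proof. by rewrite /enc /pv /plam /pmu /= !trmx0 !row_mx0. Qed.

Lemma le_eqVlt_help (x : R) : x = 0 -> x <= 0.
Proof. by move=> ->. Qed.

Lemma det_zs : \det (Kmx zs) != 0.
Proof.
apply/negP => /det0P [y y0 Ey]; move/negP: y0; apply.
rewrite -(enc_dec y); move: Ey; rewrite mulK /fL.
case: (dec y) => [[dv lam] mu] E.
have : Lop zs (dv, lam, mu) = 0 by apply: enc_inj; rewrite E enc0.
rewrite /Lop /pv /plam /pmu /= => -[E1 E2 /colP E3].
have Hm : forall i, i \notin A -> mu i 0 = 0.
  move=> i iA; have := E3 i; move: ((H zs.1.1)^T *m dv) => u.
  rewrite !mxE (negbTE iA); lra.
have HA : forall i, i \in A -> ((H zs.1.1)^T *m dv) i 0 = 0.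
  move=> i iA; have := E3 i; move: ((H zs.1.1)^T *m dv) => u.
  rewrite !mxE iA; lra.
rewrite maskA_id // in E1.
have dv0 : dv = 0.
  case: (eqVneq dv 0) => // dn0; exfalso.
  have := SOSC dn0 E2 (fun i iA _ => HA i iA) (fun i iA _ => le_eqVlt_help (HA i iA)).
  rewrite (QF E1) E2.
  rewrite big1; last by move=> j _; rewrite mxE mul0r.
  rewrite big1; first by rewrite oppr0 ?subr0 ?add0r ?addr0 ?oppr0 ltxx.
  move=> i _; case: (boolP (i \in A)) => iA; first by rewrite HA // mul0r.
  by rewrite Hm // mulr0.
rewrite dv0 mulmx0 add0r in E1.
have [-> ->] := LICQ Hm E1.
by rewrite dv0 enc0.
Qed.


Lemma maskA_entry (m : 'cV[R]_nh) i : maskA A m i 0 = if i \in A then m i 0 else 0.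
Proof. by rewrite mxE. Qed.

Lemma point zb : \det (Kmx zb) != 0 ->
  (forall i, (i \notin A -> hlin h H zb (pv (piF zb)) i 0 < 0) /\
             (i \in A -> 0 < pmu (piF zb) i 0)) ->
  [/\ QP_KKT W q g h G H zb (piF zb),
      (forall z, QP_KKT W q g h G H zb z -> z = piF zb) &
      [/\ resid W q g h G H A (piF zb) zb = 0,
          (forall i, i \notin A -> pmu (piF zb) i 0 = 0) &
          (forall z, resid W q g h G H A z zb = 0 ->
                     (forall i, i \notin A -> pmu z i 0 = 0) -> z = piF zb)]].
Proof.
move=> d0 Cond.
have [R1 R2] := (RES zb (piF zb)).1 (solve1 d0).
have uniqR : forall z, resid W q g h G H A z zb = 0 ->
    (forall i, i \notin A -> pmu z i 0 = 0) -> z = piF zb.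
  by move=> z Rz Hz; apply: solve2 => //; apply/RES.
set z1 := piF zb in R1 R2 Cond uniqR *.
have KK1 : QP_KKT W q g h G H zb z1.
  move: R1; rewrite /resid => -[S1 S2 /colP S3].
  rewrite maskA_id // in S1.
  have hl0 : forall i, i \in A -> hlin h H zb (pv z1) i 0 = 0.
    by move=> i iA; have := S3 i; rewrite maskA_entry iA => ->; rewrite mxE.
  split => // i.
  - case: (boolP (i \in A)) => iA; first by rewrite hl0.
    exact/ltW/(Cond i).1.
  - case: (boolP (i \in A)) => iA; first exact/ltW/(Cond i).2.
    by rewrite R2.
  - case: (boolP (i \in A)) => iA; first by rewrite hl0 // mulr0.
    by rewrite R2 // mul0r.
split; [done| |by split].
move=> z; rewrite /QP_KKT => -[T1 T2 T3 T4 T5].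
case: KK1 => U1 U2 U3 U4 U5.
set vb := pv zb.
set d := pv z - pv z1.
set hl1 := hlin h H zb (pv z1).
set hl2 := hlin h H zb (pv z).
have Ed : d = (pv z - vb) - (pv z1 - vb).
  by apply/matrixP => i j; rewrite !mxE; lra.
have E : W zb *m d + G vb *m (plam z - plam z1) + H vb *m (pmu z - pmu z1) = 0.
  rewrite Ed; move: T1 U1; rewrite -/vb.
  move: (pv z - vb) (pv z1 - vb) => e1 e2; rewrite !mulmxBr.
  move: (W zb *m e1) (W zb *m e2) (G vb *m plam z)
    (G vb *m plam z1) (H vb *m pmu z) (H vb *m pmu z1) => a1 a2 b1 b2 c1 c2.
  move=> /matrixP F1 /matrixP F2; apply/matrixP => i j.
  have := F1 i j; have := F2 i j; rewrite !mxE; lra.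
have Gd : (G vb)^T *m d = 0.
  rewrite Ed; move: T2 U2; rewrite -/vb.
  move: (pv z - vb) (pv z1 - vb) => e1 e2; rewrite !mulmxBr.
  move: ((G vb)^T *m e1) ((G vb)^T *m e2) => a1 a2.
  move=> /matrixP F1 /matrixP F2; apply/matrixP => i j.
  have := F1 i j; have := F2 i j; rewrite !mxE; lra.
have Hd : forall i, ((H vb)^T *m d) i 0 = hl2 i 0 - hl1 i 0.
  move=> i; rewrite /hl1 /hl2 /hlin -/vb Ed.
  move: (pv z - vb) (pv z1 - vb) => e1 e2; rewrite !mulmxBr.
  move: ((H vb)^T *m e1) ((H vb)^T *m e2) => a1 a2.
  rewrite !mxE; lra.
pose t i := hl2 i 0 * pmu z1 i 0 + hl1 i 0 * pmu z i 0.
have tle : forall i, t i <= 0.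
  move=> i; rewrite /t.
  have := mulr_le0_ge0 (T3 i) (U4 i); have := mulr_le0_ge0 (U3 i) (T4 i).
  rewrite -/hl1 -/hl2; lra.
have P := PSD zb d.
rewrite (QF E) Gd big1 in P; last by move=> j _; rewrite mxE mul0r.
have Esum : \sum_i ((H vb)^T *m d) i 0 * (pmu z - pmu z1) i 0 = \sum_i - t i.
  apply: eq_bigr => i _; rewrite Hd /t.
  have -> : (pmu z - pmu z1) i 0 = pmu z i 0 - pmu z1 i 0 by rewrite !mxE.
  have := T5 i; have := U5 i; rewrite -/hl1 -/hl2; lra.
rewrite Esum in P.
have S0 : \sum_i - t i = 0.
  apply/le_anti/andP; split; last by apply: sumr_ge0 => i _; rewrite oppr_ge0.
  move: P; lra.
have t0 : forall i, t i = 0.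
  have H0 : forall j : 'I_nh, xpredT j -> 0 <= - t j.
    by move=> j _; rewrite oppr_ge0.
  move=> i; have := @psumr_eq0P _ _ xpredT (fun i => - t i) H0 S0 i isT; lra.
have p1 : forall i, hl2 i 0 * pmu z1 i 0 = 0.
  move=> i; have := t0 i; rewrite /t.
  have := mulr_le0_ge0 (T3 i) (U4 i); have := mulr_le0_ge0 (U3 i) (T4 i).
  rewrite -/hl1 -/hl2; lra.
have p2 : forall i, hl1 i 0 * pmu z i 0 = 0.
  move=> i; have := t0 i; rewrite /t.
  have := mulr_le0_ge0 (T3 i) (U4 i); have := mulr_le0_ge0 (U3 i) (T4 i).
  rewrite -/hl1 -/hl2; lra.
have mu2out : forall i, i \notin A -> pmu z i 0 = 0.
  move=> i iA; have := p2 i; move/eqP; rewrite mulf_eq0 => /orP [|/eqP //].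
  by move/eqP => e; have := (Cond i).1 iA; rewrite -/hl1 e ltxx.
have hl2in : forall i, i \in A -> hl2 i 0 = 0.
  move=> i iA; have := p1 i; move/eqP; rewrite mulf_eq0 => /orP [/eqP //|].
  by move/eqP => e; have := (Cond i).2 iA; rewrite e ltxx.
apply: uniqR => //.
rewrite /resid maskA_id // T1 T2.
congr (_, _, _); apply/colP => i; rewrite maskA_entry.
case: ifP => iA; last by rewrite mxE.
by rewrite -/hl2 hl2in // mxE.
Qed.


Hypothesis C1W : C1 W.
Hypothesis C1q : C1 q.
Hypothesis C1G : C1 G.
Hypothesis C1H : C1 H.
Hypothesis C2g : C2 g.
Hypothesis C2h : C2 h.

Lemma diff_pv (x : PDt) : differentiable (fun z : PDt => pv z) x.
Proof. exact: (differentiable_comp (diff_fst x) (diff_fst x.1)). Qed.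
Lemma diff_plam (x : PDt) : differentiable (fun z : PDt => plam z) x.
Proof. exact: (differentiable_comp (diff_fst x) (diff_snd x.1)). Qed.
Lemma diff_pmu (x : PDt) : differentiable (fun z : PDt => pmu z) x.
Proof. exact: (diff_snd x). Qed.

Lemma mxd_enc (P : PDt -> PDt) x :
  mxd (fun z => pv (P z)) x -> mxd (fun z => plam (P z)) x ->
  mxd (fun z => pmu (P z)) x -> mxd (fun z => enc (P z)) x.
Proof.
move=> d1 d2 d3; rewrite /enc.
apply: mxd_row; first apply: mxd_row; exact: mxd_tr.
Qed.

Lemma mxd_mask (F : PDt -> 'cV[R]_nh) x : mxd F x -> mxd (fun z => maskA A (F z)) x.
Proof.
move=> dF i j; under eq_fun do rewrite mxE.
case: (i \in A); [exact: dF | exact: differentiable_cst].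
Qed.

Lemma mxd_Wf x : mxd W x.
Proof. exact/mxd_diff/(C1W.1 x). Qed.
Lemma mxd_Gf x : mxd (fun z : PDt => G (pv z)) x.
Proof. exact: (mxd_comp (diff_pv x) (C1G.1 _)). Qed.
Lemma mxd_Hf x : mxd (fun z : PDt => H (pv z)) x.
Proof. exact: (mxd_comp (diff_pv x) (C1H.1 _)). Qed.
Lemma mxd_gf x : mxd (fun z : PDt => g (pv z)) x.
Proof. exact: (mxd_comp (diff_pv x) (C2g.1.1 _)). Qed.
Lemma mxd_hf x : mxd (fun z : PDt => h (pv z)) x.
Proof. exact: (mxd_comp (diff_pv x) (C2h.1.1 _)). Qed.
Lemma mxd_qf x : mxd q x.
Proof. exact/mxd_diff/(C1q.1 x). Qed.

Lemma mxd_fL (y : 'rV[R]_N) x : mxd (fun zb => fL zb y) x.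
Proof.
rewrite /fL; apply: mxd_enc; rewrite /Lop /pv /plam /pmu /=.
- apply: mxd_add; first apply: mxd_add.
  + exact: (mxd_mul (mxd_Wf x) (mxd_cst _ _)).
  + exact: (mxd_mul (mxd_Gf x) (mxd_cst _ _)).
  + exact: (mxd_mul (mxd_Hf x) (mxd_cst _ _)).
- exact: (mxd_mul (mxd_tr (mxd_Gf x)) (mxd_cst _ _)).
- apply: mxd_add; last exact: mxd_cst.
  apply: mxd_mask; exact: (mxd_mul (mxd_tr (mxd_Hf x)) (mxd_cst _ _)).
Qed.

Lemma mxd_K x : mxd Kmx x.
Proof.
move=> i j; under eq_fun do rewrite /Kmx mxE.
exact: (mxd_fL (delta_mx 0 i) x 0 j).
Qed.

Lemma mxd_b x : mxd bvec x.
Proof.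
rewrite /bvec; apply: mxd_enc; rewrite /bPD /pv /plam /pmu /=.
- exact: (mxd_opp (mxd_qf x)).
- exact: (mxd_opp (mxd_gf x)).
- exact: (mxd_opp (mxd_mask (mxd_hf x))).
Qed.

Lemma diff_detK x : differentiable (fun zb => \det (Kmx zb)) x.
Proof. exact: (diff_det (mxd_K x)). Qed.

Lemma mxd_sol x : \det (Kmx x) != 0 -> mxd sol x.
Proof.
move=> d0; rewrite /sol.
apply: (mxd_mul (mxd_b x)); apply: mxd_scale; last exact: mxd_adj (mxd_K x).
exact: (differentiableV (diff_detK x) d0).
Qed.

Lemma diff_pi x : \det (Kmx x) != 0 -> differentiable piF x.
Proof.
move=> d0.
have ds := mxd_sol d0.
have D : differentiable (fun zb => (pv zb + pv (dec (sol zb)), plam (dec (sol zb)),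
            pmu (dec (sol zb)))) x.
  apply: differentiable_pair; first apply: differentiable_pair.
  - apply: diff_mxd; apply: mxd_add; first exact: (mxd_diff (diff_pv x)).
    exact: (mxd_tr (mxd_lsub (mxd_lsub ds))).
  - exact: (diff_mxd (mxd_tr (mxd_rsub (mxd_lsub ds)))).
  - exact: (diff_mxd (mxd_tr (mxd_rsub ds))).
exact: D.
Qed.


Lemma pi_zs : piF zs = zs.
Proof.
case: KKT0 => K1 K2 K3 K4 K5.
have hl : hlin h H zs (pv zs) = h (pv zs) by rewrite /hlin subrr mulmx0 addr0.
have Hout : forall i, i \notin A -> pmu zs i 0 = 0.
  move=> i iA; have := K5 i; rewrite hl; move/eqP; rewrite mulf_eq0 => /orP [/eqP //|].
  by move=> e; move: iA; rewrite inE e.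
apply/esym/(solve2 det_zs); apply/RES; split => //.
rewrite /resid maskA_id // K1 K2.
congr (_, _, _); apply/colP => i; rewrite maskA_entry hl.
case: ifP => iA; last by rewrite mxE.
by move: iA; rewrite inE => /eqP ->; rewrite mxE.
Qed.

Lemma main_near : exists pi : PDt -> PDt,
    \forall zb \near zs,
      [/\ QP_KKT W q g h G H zb (pi zb),
          (forall z, QP_KKT W q g h G H zb z -> z = pi zb),
          [/\ resid W q g h G H A (pi zb) zb = 0,
          (forall i, i \notin A -> pmu (pi zb) i 0 = 0) &
          (forall z, resid W q g h G H A z zb = 0 ->
                     (forall i, i \notin A -> pmu z i 0 = 0) ->
                     z = pi zb)] &
          differentiable pi zb].
Proof.
exists piF.
have dz := det_zs.
have N1 : \forall zb \near zs, \det (Kmx zb) != 0.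
  have := (differentiable_continuous (diff_detK zs)).
  move=> /cvgr_neq0 /(_ dz). done.
have N2 : \forall zb \near zs, forall i,
    (i \notin A -> hlin h H zb (pv (piF zb)) i 0 < 0) /\
    (i \in A -> 0 < pmu (piF zb) i 0).
  apply: (@filter_forall PDt 'I_nh (fun i zb =>
    (i \notin A -> hlin h H zb (pv (piF zb)) i 0 < 0) /\
    (i \in A -> 0 < pmu (piF zb) i 0)) (nbhs zs) _) => i.
  case: (boolP (i \in A)) => iA.
  - have dm : differentiable (fun zb => pmu (piF zb) i 0) zs.
      exact: (mxd_comp (diff_pi dz) (diff_pmu _) i 0).
    have pos : 0 < pmu (piF zs) i 0 by rewrite pi_zs; exact: SC.
    have := differentiable_continuous dm; move=> /cvgr_gt /(_ _ pos).
    by apply: filterS => zb P; split.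
  - have dm : differentiable (fun zb => hlin h H zb (pv (piF zb)) i 0) zs.
      rewrite /hlin; apply: mxd_add; first exact: mxd_hf.
      apply: mxd_mul; first exact: (mxd_tr (mxd_Hf zs)).
      apply: mxd_sub; last exact: (mxd_diff (diff_pv zs)).
      exact: (mxd_comp (diff_pi dz) (diff_pv _)).
    have neg : hlin h H zs (pv (piF zs)) i 0 < 0.
      rewrite pi_zs /hlin subrr mulmx0 addr0.
      case: KKT0 => _ _ K3 _ _.
      have := K3 i; rewrite /hlin subrr mulmx0 addr0 le_eqVlt => /orP [|//].
      by move=> e; move: iA; rewrite inE e.
    have := differentiable_continuous dm; move=> /cvgr_lt /(_ _ neg).
    by apply: filterS => zb P; split => // /negP.
move: N1 N2; apply: filterS2 => zb d0 C.
have [K1 K2 K3] := point d0 C.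
by split => //; apply: diff_pi.
Qed.

End Main.

Theorem lemma1 (R : realType) (nv ng nh : nat)
  (f : 'cV[R]_nv -> R^o) (g : 'cV[R]_nv -> 'cV[R]_ng) (h : 'cV[R]_nv -> 'cV[R]_nh)
  (W : PD R nv ng nh -> 'M[R]_nv) (q : PD R nv ng nh -> 'cV[R]_nv)
  (G : 'cV[R]_nv -> 'M[R]_(nv, ng)) (H : 'cV[R]_nv -> 'M[R]_(nv, nh))
  (zs : PD R nv ng nh) :
  C2 f -> C2 g -> C2 h ->
  C1 W -> C1 q -> C1 G -> C1 H ->
  (forall (z : PD R nv ng nh) (d : 'cV[R]_nv), 0 <= (d^T *m W z *m d) 0 0) ->
  QP_KKT W q g h G H zs zs ->
  QP_SOSC W h G H zs -> QP_LICQ h G H zs -> QP_SC h zs ->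
  exists pi : PD R nv ng nh -> PD R nv ng nh,
    \forall zb \near zs,
      [/\ QP_KKT W q g h G H zb (pi zb),
          (forall z, QP_KKT W q g h G H zb z -> z = pi zb),
          [/\ resid W q g h G H (active_set h zs) (pi zb) zb = 0,
          (forall i, i \notin active_set h zs -> pmu (pi zb) i 0 = 0) &
          (forall z, resid W q g h G H (active_set h zs) z zb = 0 ->
                     (forall i, i \notin active_set h zs -> pmu z i 0 = 0) ->
                     z = pi zb)] &
          differentiable pi zb].
Proof.
move=> _ C2g C2h C1W C1q C1G C1H PSD KKT SOSC LICQ SC.
exact: (@main_near R nv ng nh W q g h G H zs KKT SOSC LICQ SC PSD C1W C1q C1G C1H C2g C2h).
Qed.
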